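(* Let the reals $e^1_{j,n},e^2_{j,n},v_{j,n}$ ($0\le j\le J$, $1\le n\le N$) and $d^1_{j,n},d^2_{j,n}$ ($0\le j\le J$, $1\le n\le N-1$) be feasible for $\mathbf L_H^{\mathcal X,\mathcal T}$ (described in the context). Then the associated Markovian semi-static trading strategy super-replicates the American claim along every path with $x_{t_n}\in\mathcal X$ for $1\le n\le N$: for every $(x_{t_1},\dots,x_{t_N})\in\mathcal X^N$ and every exercise time $\rho\in\mathcal T$, $\mathcal G_T(x_{t_1},\dots,x_{t_N},\rho)\ge a(x_\rho,\rho)$.
   Context: Fix integers $N\ge1$, $J\ge1$, times $0=t_0<t_1<\dots<t_N=T$, $\mathcal T=\{t_1,\dots,t_N\}$, strikes $0<x_1<\dots<x_J$, $x_0=0$, $\mathcal X=\{x_0,\dots,x_J\}$, numbers $p_{j,n}$ ($0\le j\le J$, $1\le n\le N$) (the risk-neutral probabilities $\mathbb P(X_{t_n}=x_j)$ implied by call prices), and a payoff $a:\mathcal X\times\mathcal T\to[0,\infty)$. $\mathbf L_H^{\mathcal X,\mathcal T}$ is the linear program: over reals $e^1_{j,n},e^2_{j,n},v_{j,n}$ ($1\le n\le N$) and $d^1_{j,n},d^2_{j,n}$ ($1\le n\le N-1$), with $e^1_{j,N}=e^2_{j,1}=0$, minimise $\sum_{j,n}(e^1_{j,n}+e^2_{j,n})p_{j,n}+\sum_jv_{j,N}p_{j,N}$ subject to $v_{j,n}\ge0$ and (i) $v_{j,n}\ge a(x_j,t_n)$; (ii) $e^1_{j,n}+e^2_{k,n+1}+(x_k-x_j)d^1_{j,n}\ge0$;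 (iii) $e^1_{j,n}+e^2_{k,n+1}+(x_k-x_j)d^2_{j,n}-v_{j,n}+v_{k,n+1}\ge0$ for all $0\le j,k\le J$, $1\le n\le N-1$. The associated Markovian semi-static strategy holds the European claim paying $b_{j,n}$ at $t_n$ if $X_{t_n}=x_j$, where $b_{j,n}=e^1_{j,n}+e^2_{j,n}$ for $n<N$ and $b_{j,N}=e^1_{j,N}+e^2_{j,N}+v_{j,N}$, and over $[t_n,t_{n+1}]$ ($1\le n\le N-1$) holds $d^1_{j,n}$ units of stock if $x_{t_n}=x_j$ and exercise has not occurred by $t_n$ (i.e. $n<\mathcal N(\rho)$), and $d^2_{j,n}$ units if $x_{t_n}=x_j$ and $n\ge\mathcal N(\rho)$, where $\mathcal N(\rho)=\min\{n:t_n\ge\rho\}$ for exercise time $\rho$. Its terminal payoff along $(x_{t_1},\dots,x_{t_N})$ with exercise at $\rho$ is $\mathcal G_T=\sum_{n,j}b_{j,n}1_{\{x_{t_n}=x_j\}}+\sum_{n=1}^{\mathcal N(\rho)-1}d^1_{n}(x_{t_n})(x_{t_{n+1}}-x_{t_n})+\sum_{n=\mathcal N(\rho)}^{N-1}d^2_{n}(x_{t_n})(x_{t_{n+1}}-x_{t_n})$, with $d^\delta_n(x_j):=d^\delta_{j,n}$. *)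

(* Defs.v *)
From HB Require Import structures.
From mathcomp Require Import all_boot all_order all_algebra.
From mathcomp Require Import reals.
Set Implicit Arguments. Unset Strict Implicit. Unset Printing Implicit Defensive.
Import Order.TTheory GRing.Theory Num.Theory.
Local Open Scope ring_scope.

Section Defs.
Variable R : realType.

(* Time indices run over 1..N, strike indices over 0..J.
   Variables of the LP are functions of (j, n). *)

Definition feasible (N J : nat) (x : nat -> R) (t : nat -> R) (a : R -> R -> R)
  (e1 e2 v d1 d2 : nat -> nat -> R) : Prop :=
  (forall j, (j <= J)%N -> e1 j N = 0) /\
  (forall j, (j <= J)%N -> e2 j 1%N = 0) /\
  (forall j n, (j <= J)%N -> (1 <= n <= N)%N -> 0 <= v j n) /\
  (forall j n, (j <= J)%N -> (1 <= n <= N)%N -> a (x j) (t n) <= v j n) /\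
  (forall j k n, (j <= J)%N -> (k <= J)%N -> (1 <= n <= N.-1)%N ->
      0 <= e1 j n + e2 k n.+1 + (x k - x j) * d1 j n) /\
  (forall j k n, (j <= J)%N -> (k <= J)%N -> (1 <= n <= N.-1)%N ->
      0 <= e1 j n + e2 k n.+1 + (x k - x j) * d2 j n - v j n + v k n.+1).

(* European claim payoffs b_{j,n}. *)
Definition bcoef (N : nat) (e1 e2 v : nat -> nat -> R) (j n : nat) : R :=
  if (n < N)%N then e1 j n + e2 j n else e1 j n + e2 j n + v j n.

Definition Nrho (N : nat) (t : nat -> R) (rho : R) : nat :=
  (find (fun n => rho <= t n) (iota 1 N)).+1.

(* Terminal value G_T of the Markovian semi-static strategy along the path
   x_{t_n} = x (w n), with exercise time rho. *)
Definition GT (N J : nat) (x : nat -> R) (t : nat -> R)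
  (e1 e2 v d1 d2 : nat -> nat -> R) (w : nat -> nat) (rho : R) : R :=
  \sum_(1 <= n < N.+1) \sum_(j < J.+1) bcoef N e1 e2 v j n * (x (w n) == x j)%:R
  + \sum_(1 <= n < Nrho N t rho) d1 (w n) n * (x (w n.+1) - x (w n))
  + \sum_(Nrho N t rho <= n < N) d2 (w n) n * (x (w n.+1) - x (w n)).

End Defs.

(* Main.v *)
Require Import Defs.
From HB Require Import structures.
From mathcomp Require Import all_boot all_order all_algebra.
From mathcomp Require Import reals.
From mathcomp Require Import zify ring lra.
Import Order.TTheory GRing.Theory Num.Theory.
Local Open Scope ring_scope.

Theorem mainTheorem6 (R : realType) (N J : nat) (t : nat -> R) (x : nat -> R)
  (p : nat -> nat -> R) (a : R -> R -> R)
  (e1 e2 v d1 d2 : nat -> nat -> R) :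
  (1 <= N)%N -> (1 <= J)%N ->
  t 0%N = 0 -> (forall n, (n < N)%N -> t n < t n.+1) ->
  x 0%N = 0 -> 0 < x 1%N -> (forall j, (j < J)%N -> x j < x j.+1) ->
  (forall j n, (j <= J)%N -> (1 <= n <= N)%N -> 0 <= a (x j) (t n)) ->
  feasible N J x t a e1 e2 v d1 d2 ->
  forall (w : nat -> nat), (forall n, (1 <= n <= N)%N -> (w n <= J)%N) ->
  forall m : nat, (1 <= m <= N)%N ->
  a (x (w m)) (t m) <= GT N J x t e1 e2 v d1 d2 w (t m).
Proof.
move=> N1 J1 t0 tinc x0 x1 xinc age0 [fe1 [fe2 [fv0 [fva [fd1 fd2]]]]] w wJ m /andP[m1 mN].
have tmono : forall i k, (i + k.+1 <= N)%N -> t i < t (i + k.+1)%N.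
  move=> i; elim=> [|k IH] h; first by rewrite addn1; apply: tinc; lia.
  apply: lt_trans (IH _) _; first lia.
  rewrite (addnS i k.+1); apply: tinc; lia.
have xmono : forall i k, (i + k.+1 <= J)%N -> x i < x (i + k.+1)%N.
  move=> i; elim=> [|k IH] h; first by rewrite addn1; apply: xinc; lia.
  apply: lt_trans (IH _) _; first lia.
  rewrite (addnS i k.+1); apply: xinc; lia.
have xinj : forall i k, (i <= J)%N -> (k <= J)%N -> x i = x k -> i = k.
  move=> i k hi hk e; case: (ltngtP i k) => // h.
  - have := xmono i (k - i.+1)%N; rewrite (_ : (i + (k - i.+1).+1 = k)%N); last lia.
    by rewrite e ltxx => /(_ hk).
  - have := xmono k (i - k.+1)%N; rewrite (_ : (k + (i - k.+1).+1 = i)%N); last lia.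
    by rewrite e ltxx => /(_ hi).
have Nm : Nrho N t (t m) = m.
  rewrite /Nrho (_ : iota 1 N = iota 1 m.-1 ++ iota m (N - m.-1)); last first.
    have -> : iota m (N - m.-1) = iota (1 + m.-1) (N - m.-1) by congr iota; lia.
    rewrite -iotaD; congr iota; lia.
  rewrite find_cat.
  have -> : has (fun n => t m <= t n) (iota 1 m.-1) = false.
    apply/hasP => -[n]; rewrite mem_iota => /andP[h1 h2].
    have := tmono n (m - n.+1)%N; rewrite (_ : (n + (m - n.+1).+1 = m)%N); last lia.
    move=> /(_ mN) h3 h4; have := lt_le_trans h3 h4; by rewrite ltxx.
  rewrite size_iota (_ : (N - m.-1 = (N - m).+1)%N); last lia.
  by rewrite /= lexx /=; lia.
rewrite /GT Nm.
have ind : forall n, (1 <= n < N.+1)%N ->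
    \sum_(j < J.+1) bcoef N e1 e2 v j n * (x (w n) == x j)%:R = bcoef N e1 e2 v (w n) n.
  move=> n hn'; have hn : (1 <= n <= N)%N by []; have hw : (w n < J.+1)%N by rewrite ltnS wJ.
  rewrite (bigD1 (Ordinal hw)) //= eqxx mulr1 big1 ?addr0 // => j hj.
  case: eqP => [e|]; last by rewrite mulr0.
  exfalso; move: hj => /eqP; apply; apply: val_inj => /=.
  symmetry; by apply: (xinj _ _ (wJ _ hn)); rewrite // -ltnS.
rewrite (eq_big_nat _ _ ind).
set E1 := fun n => e1 (w n) n.
set E2 := fun n => e2 (w n) n.
set V := fun n => v (w n) n.
set c := fun n => E1 n + E2 n.+1.
have bsum : \sum_(1 <= n < N.+1) bcoef N e1 e2 v (w n) n = \sum_(1 <= n < N) c n + V N.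
  rewrite big_nat_recr //= /bcoef ltnn.
  rewrite (eq_big_nat _ _ (F2 := fun n => E1 n + E2 n)); last first.
    by move=> n /andP[_ ->].
  rewrite big_split /= fe1 ?wJ ?N1 ?leqnn // add0r.
  have e2s : \sum_(1 <= i < N) E2 i + E2 N = \sum_(1 <= i < N) E2 i.+1.
    rewrite -big_nat_recr //=. 
    rewrite big_nat_recl // /E2 fe2 ?wJ ?N1 // add0r.
    by case: N N1 {mN tmono tinc fe1 fd1 fd2 fva fv0 wJ ind Nm age0} => [|N'] //.
  rewrite /c big_split /= -e2s /E2 /V; lra.
rewrite bsum.
have C : \sum_(1 <= n < N) c n = \sum_(1 <= n < m) c n + \sum_(m <= n < N.+1.-1) c n.
  by rewrite -big_cat_nat.
have S1 : 0 <= \sum_(1 <= n < m) c n + \sum_(1 <= n < m) d1 (w n) n * (x (w n.+1) - x (w n)).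
  rewrite -big_split /= big_nat_cond; apply: sumr_ge0 => i /andP[/andP[h1 h2] _].
  rewrite /c /E1 /E2 mulrC; apply: fd1; [apply: wJ; lia | apply: wJ; lia | lia].
have S2 : \sum_(m <= n < N) (V n - V n.+1) <= \sum_(m <= n < N) c n
     + \sum_(m <= n < N) d2 (w n) n * (x (w n.+1) - x (w n)).
  rewrite -big_split /=; apply: ler_sum_nat => i /andP[h1 h2].
  have := fd2 (w i) (w i.+1) i; rewrite /c /E1 /E2 /V.
  move=> /(_ _ _ _) H; have := H ltac:(apply: wJ; lia) ltac:(apply: wJ; lia) ltac:(lia).
  lra.
have T : \sum_(m <= n < N) (V n - V n.+1) = V m - V N.
  rewrite (eq_big_nat _ _ (F2 := fun n => - (V n.+1 - V n))); last by move=> *; rewrite opprB.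
  by rewrite sumrN telescope_sumr // opprB.
have va : a (x (w m)) (t m) <= V m by apply: fva; [apply: wJ; lia | lia].
rewrite C; lra.
Qed.
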